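(* Let $a,b\in\mathbb{Z}$ with $\gcd(a,b)=1$ and $a^2+ab-b^2\not\equiv0\pmod5$. Let $m\ge1$ with $5\mid m$, and suppose $\{G_n(a,b)\}$ is complete mod $m$. Then $\{G_n(a,b)\}$ is complete mod $5m$.
   Context: For integers $a,b$ with $\gcd(a,b)=1$, the Gibonacci sequence $\{G_n(a,b)\}_{n\ge1}$ is defined by $G_1=a$, $G_2=b$, $G_{n+1}=G_{n-1}+G_n$. A sequence is complete mod $m$ if every residue class modulo $m$ contains some term of the sequence. *)

(* Defs.v *)
From Stdlib Require Import ZArith.
Open Scope Z_scope.

(* Gibonacci sequence, 1-indexed: gib a b 1 = a, gib a b 2 = b,
   gib a b (n+1) = gib a b (n-1) + gib a b n.  (gib a b 0 = a is a junk
   value; the completeness notion below only uses indices n >= 1.) *)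
Fixpoint gib_pair (a b : Z) (n : nat) : Z * Z :=
  match n with
  | O => (a, b)
  | S k => let (x, y) := gib_pair a b k in (y, x + y)
  end.

Definition gib (a b : Z) (n : nat) : Z := fst (gib_pair a b (Nat.pred n)).

Definition complete_mod (G : nat -> Z) (m : Z) : Prop :=
  forall r : Z, exists n : nat, (1 <= n)%nat /\ G n mod m = r mod m.

(* Main.v *)
Require Import Defs.
From Stdlib Require Import ZArith Znumtheory List Lia.
From mathcomp Require all_boot all_algebra ring zify.
Open Scope Z_scope.

Fixpoint fpn (n : nat) : nat * nat :=
  match n with O => (1%nat, 0%nat) | S k => (snd (fpn k), (fst (fpn k) + snd (fpn k))%nat) end.

Fixpoint fp (n : nat) : Z * Z :=
  match n with O => (1, 0) | S k => let u := fp k in (snd u, fst u + snd u) end.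
Definition pm (u v : Z * Z) : Z * Z :=
  (fst u * fst v + snd u * snd v, fst u * snd v + snd u * fst v + snd u * snd v).
Fixpoint ppow (u : Z * Z) (k : nat) : Z * Z :=
  match k with O => (1, 0) | S k => pm (ppow u k) u end.

Lemma fp_add n k : fp (n + k) = pm (fp n) (fp k).
Proof.
induction k as [|k IH].
- rewrite Nat.add_0_r; destruct (fp n); unfold pm; simpl; f_equal; ring.
- rewrite Nat.add_succ_r; simpl; rewrite IH; destruct (fp n), (fp k); unfold pm; simpl; f_equal; ring.
Qed.

Lemma fp_mul n k : fp (n * k) = ppow (fp n) k.
Proof.
induction k as [|k IH].
- rewrite Nat.mul_0_r; reflexivity.
- rewrite Nat.mul_succ_r, fp_add, IH; reflexivity.
Qed.

Definition recs (s : nat -> Z) := forall n, s (S (S n)) = s n + s (S n).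

Lemma fshift s U n : recs s -> s (n + U)%nat = fst (fp U) * s n + snd (fp U) * s (S n).
Proof.
intro Hs; revert n; induction U as [|U IH]; intro n.
- rewrite Nat.add_0_r; cbn [fp fst snd]; ring.
- replace (n + S U)%nat with (S n + U)%nat by lia.
  rewrite IH; cbn [fp fst snd]; rewrite Hs; ring.
Qed.

Definition pc (d : Z) (u v : Z * Z) := (d | fst u - fst v) /\ (d | snd u - snd v).

Ltac divtac := repeat first [ apply Z.divide_add_r | apply Z.divide_sub_r
  | (apply Z.divide_mul_l; assumption) | (apply Z.divide_mul_r; assumption) | assumption ].

Lemma pc_mul d u u' v v' : pc d u u' -> pc d v v' -> pc d (pm u v) (pm u' v').
Proof.
destruct u as [u1 u2], u' as [w1 w2], v as [v1 v2], v' as [x1 x2].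
unfold pc, pm; simpl; intros [H1 H2] [H3 H4]; split.
- replace (u1 * v1 + u2 * v2 - (w1 * x1 + w2 * x2)) with
    ((u1 - w1) * v1 + w1 * (v1 - x1) + (u2 - w2) * v2 + w2 * (v2 - x2)) by ring.
  divtac.
- replace (u1 * v2 + u2 * v1 + u2 * v2 - (w1 * x2 + w2 * x1 + w2 * x2)) with
    ((u1 - w1) * v2 + w1 * (v2 - x2) + (u2 - w2) * v1 + w2 * (v1 - x1)
     + (u2 - w2) * v2 + w2 * (v2 - x2)) by ring.
  divtac.
Qed.

Lemma ppow_pc d u k : pc d u (1, 0) -> pc d (ppow u k) (1, 0).
Proof.
intro H; induction k as [|k IH].
- split; apply Z.divide_0_r.
- simpl; change (pc d (pm (ppow u k) u) (pm (1, 0) (1, 0))); apply pc_mul; assumption.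
Qed.

Definition Per (d : Z) (U : nat) := pc d (fp U) (1, 0).

Lemma Per_mul d U k : Per d U -> Per d (U * k).
Proof. unfold Per; intro H; rewrite fp_mul; apply ppow_pc; assumption. Qed.

Lemma Per_div d e U : (e | d) -> Per d U -> Per e U.
Proof. intros He [H1 H2]; split; eapply Z.divide_trans; eauto. Qed.

Lemma Per_seq d U s n : Per d U -> recs s -> (d | s (n + U)%nat - s n).
Proof.
intros [H1 H2] Hs; rewrite (fshift s U n Hs).
simpl in H1, H2.
replace (fst (fp U) * s n + snd (fp U) * s (S n) - s n) with
  ((fst (fp U) - 1) * s n + (snd (fp U) - 0) * s (S n)) by ring.
divtac.
Qed.

Lemma Per_iter d U s : Per d U -> recs s -> forall j n, (d | s (n + j * U)%nat - s n).
Proof.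
intros HP Hs j; induction j as [|j IH]; intro n.
- rewrite Nat.mul_0_l, Nat.add_0_r, Z.sub_diag; apply Z.divide_0_r.
- replace (n + S j * U)%nat with ((n + j * U) + U)%nat by lia.
  replace (s (n + j * U + U)%nat - s n) with
    ((s (n + j * U + U)%nat - s (n + j * U)%nat) + (s (n + j * U)%nat - s n)) by ring.
  apply Z.divide_add_r; [apply Per_seq; assumption | apply IH].
Qed.

Lemma ppow_expand D1 D2 k : exists S1 S2,
  ppow (1 + D1, D2) k =
  (1 + Z.of_nat k * D1 + fst (pm (pm (D1, D2) (D1, D2)) (S1, S2)),
   Z.of_nat k * D2 + snd (pm (pm (D1, D2) (D1, D2)) (S1, S2))).
Proof.
induction k as [|k IH].
- exists 0, 0; unfold pm; cbn [ppow fst snd Z.of_nat]; f_equal; ring.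
- destruct IH as [S1 [S2 E]].
  exists (Z.of_nat k + S1 + fst (pm (S1, S2) (D1, D2))), (S2 + snd (pm (S1, S2) (D1, D2))).
  cbn [ppow]; rewrite E; unfold pm; cbn [fst snd]; rewrite Nat2Z.inj_succ; f_equal; ring.
Qed.

Lemma div_mul2 a b x y : (a | x) -> (b | y) -> (a * b | x * y).
Proof. intros [k Hk] [l Hl]; exists (k * l); subst; ring. Qed.

Lemma corr_div c D1 D2 S1 S2 :
  (c | D1 * D1) -> (c | D1 * D2) -> (c | D2 * D2) ->
  (c | fst (pm (pm (D1, D2) (D1, D2)) (S1, S2))) /\ (c | snd (pm (pm (D1, D2) (D1, D2)) (S1, S2))).
Proof.
intros H1 H2 H3; unfold pm; simpl.
assert (HA : (c | D1 * D1 + D2 * D2)) by divtac.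
assert (HB : (c | D1 * D2 + D2 * D1 + D2 * D2)) by (rewrite (Z.mul_comm D2 D1); divtac).
split; divtac.
Qed.

Lemma Per_comb d1 d2 U : Per d1 U -> Per d2 U -> 0 <= d2 -> Per (d1 * d2) (U * Z.to_nat d2).
Proof.
intros [H1 H2] [H3 H4] Hd2; unfold Per, pc; rewrite fp_mul.
destruct (fp U) as [x y]; cbn [fst snd] in *.
rewrite Z.sub_0_r in H2, H4.
destruct (ppow_expand (x - 1) y (Z.to_nat d2)) as [S1 [S2 E]].
replace (1 + (x - 1)) with x in E by ring.
rewrite E; clear E; rewrite Z2Nat.id by assumption; cbn [fst snd].
destruct (corr_div (d1 * d2) (x - 1) y S1 S2) as [C1 C2];
  try (apply div_mul2; assumption).
split.
- replace (1 + d2 * (x - 1) + fst (pm (pm (x - 1, y) (x - 1, y)) (S1, S2)) - 1) with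
    (d2 * (x - 1) + fst (pm (pm (x - 1, y) (x - 1, y)) (S1, S2))) by ring.
  apply Z.divide_add_r; [rewrite Z.mul_comm; apply div_mul2; [apply Z.divide_refl | assumption] | assumption].
- rewrite Z.sub_0_r.
  apply Z.divide_add_r; [rewrite Z.mul_comm; apply div_mul2; [apply Z.divide_refl | assumption] | assumption].
Qed.

Lemma five_base1 : exists X Y, fp (4 * 5 ^ 1) = (1 + 5 ^ (Z.of_nat 1) * X, 5 ^ (Z.of_nat 1) * Y) /\ X mod 5 = 1 /\ Y mod 5 = 3.
Proof. exists 836, 1353; split; [vm_compute; reflexivity | split; reflexivity]. Qed.

Lemma five_base2 : exists X Y, fp (4 * 5 ^ 2) = (1 + 5 ^ (Z.of_nat 2) * X, 5 ^ (Z.of_nat 2) * Y) /\ X mod 5 = 1 /\ Y mod 5 = 3.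
Proof. exists 8756919833382206761, 14168993927170476603; split; [vm_compute; reflexivity | split; reflexivity]. Qed.

Lemma five_step k : (2 <= k)%nat ->
  (exists X Y, fp (4 * 5 ^ k) = (1 + 5 ^ (Z.of_nat k) * X, 5 ^ (Z.of_nat k) * Y) /\ X mod 5 = 1 /\ Y mod 5 = 3) ->
  (exists X Y, fp (4 * 5 ^ S k) = (1 + 5 ^ (Z.of_nat (S k)) * X, 5 ^ (Z.of_nat (S k)) * Y) /\ X mod 5 = 1 /\ Y mod 5 = 3).
Proof.
intros hk [X [Y [E [HX HY]]]].
replace (4 * 5 ^ S k)%nat with (4 * 5 ^ k * 5)%nat by (simpl; lia).
rewrite fp_mul, E.
set (c := 5 ^ Z.of_nat k).
assert (Hc : c = 25 * 5 ^ (Z.of_nat k - 2)).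
{ unfold c; replace (Z.of_nat k) with (2 + (Z.of_nat k - 2)) at 1 by lia.
  rewrite Z.pow_add_r by lia; reflexivity. }
assert (HS : 5 ^ Z.of_nat (S k) = 5 * c).
{ unfold c; rewrite Nat2Z.inj_succ, Z.pow_succ_r by lia; reflexivity. }
destruct (ppow_expand (c * X) (c * Y) 5) as [S1 [S2 E2]].
rewrite E2; clear E2.
destruct (corr_div (c * c) (c * X) (c * Y) S1 S2) as [[w1 W1] [w2 W2]];
  try (apply div_mul2; apply Z.divide_factor_l).
rewrite W1, W2, HS.
exists (X + 5 * (5 ^ (Z.of_nat k - 2) * w1)), (Y + 5 * (5 ^ (Z.of_nat k - 2) * w2)).
split; [| split].
- change (Z.of_nat 5) with 5; f_equal.
  + replace (w1 * (c * c)) with (5 * c * (5 * (5 ^ (Z.of_nat k - 2) * w1))) by (rewrite Hc at 2; ring); ring.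
  + replace (w2 * (c * c)) with (5 * c * (5 * (5 ^ (Z.of_nat k - 2) * w2))) by (rewrite Hc at 2; ring); ring.
- rewrite <- HX; replace (X + 5 * (5 ^ (Z.of_nat k - 2) * w1)) with (X + (5 ^ (Z.of_nat k - 2) * w1) * 5) by ring.
  rewrite Z.mod_add by lia; reflexivity.
- rewrite <- HY; replace (Y + 5 * (5 ^ (Z.of_nat k - 2) * w2)) with (Y + (5 ^ (Z.of_nat k - 2) * w2) * 5) by ring.
  rewrite Z.mod_add by lia; reflexivity.
Qed.

Lemma five_adic k : (1 <= k)%nat ->
  exists X Y, fp (4 * 5 ^ k) = (1 + 5 ^ (Z.of_nat k) * X, 5 ^ (Z.of_nat k) * Y) /\ X mod 5 = 1 /\ Y mod 5 = 3.
Proof.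
induction k as [|k IH]; intro hk; [lia|].
destruct k as [|[|k]].
- exact five_base1.
- exact five_base2.
- apply five_step; [lia | apply IH; lia].
Qed.

Lemma mod_of_div a b c : c <> 0 -> (c | a - b) -> a mod c = b mod c.
Proof.
intros Hc [k Hk]; replace a with (b + k * c) by lia; apply Z.mod_add; assumption.
Qed.

Lemma div_of_mod a b c : c <> 0 -> a mod c = b mod c -> (c | a - b).
Proof.
intros Hc H; exists (a / c - b / c).
pose proof (Z.div_mod a c Hc); pose proof (Z.div_mod b c Hc).
rewrite Z.mul_sub_distr_r; lia.
Qed.

Lemma rec_gib a b : recs (fun k => gib a b (S k)).
Proof.
intro n; unfold gib; simpl; destruct (gib_pair a b n); simpl; ring.
Qed.

Lemma complete_div G m d : m <> 0 -> d <> 0 -> (d | m) -> complete_mod G m -> complete_mod G d.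
Proof.
intros Hm Hd Hdm Hc r; destruct (Hc r) as [n [Hn E]]; exists n; split; [assumption|].
apply mod_of_div; [assumption|]; eapply Z.divide_trans; [eassumption|].
apply div_of_mod; assumption.
Qed.

Lemma incomplete a b (p : Z) (U : nat) : 1 < p -> (1 <= U)%nat -> Z.of_nat U < p ->
  Per p U -> ~ complete_mod (gib a b) p.
Proof.
intros Hp HU HUp HP Hc.
set (g := fun k => gib a b (S k)).
assert (Hincl : incl (seq 0 (Z.to_nat p)) (map (fun i => Z.to_nat (g i mod p)) (seq 0 U))).
{ intros r Hr; apply in_seq in Hr.
  destruct (Hc (Z.of_nat r)) as [n [Hn E]].
  apply in_map_iff; exists ((n - 1) mod U)%nat; split.
  - assert (Hper := Per_iter p U g HP (rec_gib a b) ((n - 1) / U) ((n - 1) mod U)).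
    replace ((n - 1) mod U + (n - 1) / U * U)%nat with (n - 1)%nat in Hper
      by (rewrite (Nat.div_mod_eq (n - 1) U) at 1; lia).
    apply mod_of_div in Hper; [|lia].
    unfold g in *; rewrite <- Hper.
    replace (S (n - 1)) with n by lia; rewrite E.
    rewrite Z.mod_small by lia; lia.
  - apply in_seq; split; [lia|]; simpl; apply Nat.mod_upper_bound; lia. }
apply NoDup_incl_length in Hincl; [|apply seq_NoDup].
rewrite length_map, !length_seq in Hincl; lia.
Qed.

Lemma prime5 : prime 5.
Proof.
apply prime_intro; [lia|]; intros n Hn.
apply Zgcd_1_rel_prime.
assert (n = 1 \/ n = 2 \/ n = 3 \/ n = 4) as [ H | [ H | [ H | H ] ] ] by lia; subst n; reflexivity.
Qed.

Lemma not5_mul a b : ~ (5 | a) -> ~ (5 | b) -> ~ (5 | a * b).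
Proof.
intros Ha Hb Hab; destruct (prime_mult 5 prime5 a b Hab); contradiction.
Qed.

Lemma fp_fpn n : fp n = (Z.of_nat (fst (fpn n)), Z.of_nat (snd (fpn n))).
Proof.
induction n as [|n IH]; [reflexivity|].
cbn [fp fpn]; rewrite IH; cbn [fst snd]; rewrite Nat2Z.inj_add; reflexivity.
Qed.

Definition pdi_prop (n : nat) : Prop := exists p : nat,
  (Z.of_nat p | Z.of_nat n) /\ (1 < p)%nat /\
  (p = 2%nat \/ p = 5%nat \/ Per (Z.of_nat p) (p - 1) \/
   ((Z.of_nat p mod 5 = 2 \/ Z.of_nat p mod 5 = 3) /\ Per (Z.of_nat p) (2 * p + 2))).

Module NTM.
Import all_boot all_algebra ring zify.
Import GRing.Theory.
Local Open Scope ring_scope.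
Local Set Implicit Arguments. Local Unset Strict Implicit.


Section NT.
Variable F : fieldType.
Local Notation P := {poly F}.
Definition cong (d a b : P) := exists q, a - b = q * d.

Lemma cong_refl d a : cong d a a.
Proof. by exists 0; rewrite subrr mul0r. Qed.
Lemma cong_eq d a b : a = b -> cong d a b.
Proof. by move=> ->; apply: cong_refl. Qed.
Lemma cong_sym d a b : cong d a b -> cong d b a.
Proof. by case=> q h; exists (- q); rewrite mulNr -h opprB. Qed.
Lemma cong_trans d a b c : cong d a b -> cong d b c -> cong d a c.
Proof.
by case=> q h [q' h']; exists (q + q'); rewrite mulrDl -h -h'; ring.
Qed.
Lemma cong_add d a b a' b' : cong d a b -> cong d a' b' -> cong d (a + a') (b + b').
Proof. by case=> q h [q' h']; exists (q + q'); rewrite mulrDl -h -h'; ring. Qed.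
Lemma cong_sub d a b a' b' : cong d a b -> cong d a' b' -> cong d (a - a') (b - b').
Proof. by case=> q h [q' h']; exists (q - q'); rewrite mulrBl -h -h'; ring. Qed.
Lemma cong_mul d a b a' b' : cong d a b -> cong d a' b' -> cong d (a * a') (b * b').
Proof.
case=> q h [q' h']; exists (q * a' + b * q').
have -> : a * a' - b * b' = (a - b) * a' + b * (a' - b') by ring.
by rewrite h h'; ring.
Qed.
Lemma cong_pow d a b n : cong d a b -> cong d (a ^+ n) (b ^+ n).
Proof.
move=> h; elim: n => [|n IH]; first by rewrite !expr0; apply: cong_refl.
by rewrite !exprS; apply: cong_mul.
Qed.

Lemma cong0_small d A : cong d A 0 -> d != 0 -> (size A < size d)%N -> A = 0.
Proof.
case=> q; rewrite subr0 => ->  dn0.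
have [->|qn0] := eqVneq q 0; first by rewrite mul0r.
rewrite size_mul //; have : (0 < size q)%N by rewrite size_poly_gt0.
case: (size q) => // n _; rewrite addSn /= => h.
by move: (leq_ltn_trans (leq_addl n _) h); rewrite ltnn.
Qed.

Definition dd : P := 'X^2 - 'X - 1.

Lemma size_dd : size dd = 3%N.
Proof.
have -> : dd = 'X^2 + - ('X + 1%:P) by rewrite /dd polyC1; ring.
by rewrite size_polyDl ?size_polyXn // size_polyN size_XaddC.
Qed.

Lemma dd_neq0 : dd != 0.
Proof. by rewrite -size_poly_eq0 size_dd. Qed.

Lemma fibX n : cong dd ('X^n) ((fpn n).1%:R + (fpn n).2%:R * 'X).
Proof.
elim: n => [|n [q Hq]] /=.
  by exists 0; rewrite expr0 mul0r addr0 subrr mul0r.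
exists ('X * q + (fpn n).2%:R).
move/eqP: Hq; rewrite subr_eq => /eqP Hq.
rewrite exprS Hq natrD /dd; ring.
Qed.

Lemma extract_dd U : cong dd ('X^U) 1 -> (fpn U).1%:R = 1 :> F /\ (fpn U).2%:R = 0 :> F.
Proof.
move=> h.
have h2 := cong_trans (cong_sym (fibX U)) h.
set a : F := (fpn U).1%:R - 1; set b : F := (fpn U).2%:R.
have E : (fpn U).1%:R + (fpn U).2%:R * 'X - 1 = b%:P * 'X + a%:P :> P.
  by rewrite /a /b polyCB polyC1 !polyC_natr; ring.
have h3 : cong dd (b%:P * 'X + a%:P) 0.
  by case: h2 => q hq; exists q; rewrite subr0 -E.
have Z := cong0_small h3 dd_neq0.
have {}Z : b%:P * 'X + a%:P = 0.
  apply: Z; rewrite size_dd size_MXaddC.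
  by case: ifP => //; rewrite ltnS; have := size_polyC_leq1 b.
have c0 := congr1 (fun q : P => q`_0) Z.
have c1 := congr1 (fun q : P => q`_1) Z.
move: c0 c1; rewrite /= !coefD !coefMX !coefC /= add0r addr0 => ha hb.
split; last by [].
by apply/eqP; rewrite -subr_eq0; apply/eqP.
Qed.


Definition ee : P := 'X^5 - 1.
Lemma size_ee : size ee = 6%N.
Proof. by rewrite /ee -polyC1 size_XnsubC. Qed.
Lemma ee_neq0 : ee != 0.
Proof. by rewrite -size_poly_eq0 size_ee. Qed.

Lemma Xmod5 n : cong ee ('X^n) ('X^(n %% 5)).
Proof.
rewrite {1}(divn_eq n 5) exprD mulnC exprM.
rewrite -{2}(mul1r ('X^(n %% 5))); apply: cong_mul; last exact: cong_refl.
rewrite -(expr1n _ (n %/ 5)); apply: cong_pow.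
by exists 1; rewrite mul1r.
Qed.

Variable p : nat.
Hypothesis hp : p \in [pchar F].
Hypothesis hodd : odd p.
Hypothesis h5 : (5%:R : F) != 0.

Lemma hpP : p \in [pchar P].
Proof. by rewrite pchar_poly. Qed.

Lemma frobD (a b : P) : (a + b) ^+ p = a ^+ p + b ^+ p.
Proof.
rewrite -!(pFrobenius_autE hpP) pFrobenius_autD_comm //.
by rewrite /GRing.comm mulrC.
Qed.
Lemma frobB (a b : P) : (a - b) ^+ p = a ^+ p - b ^+ p.
Proof.
rewrite -!(pFrobenius_autE hpP) pFrobenius_autB_comm //.
by rewrite /GRing.comm mulrC.
Qed.
Lemma frobnat n : (n%:R : P) ^+ p = n%:R.
Proof. by rewrite -!(pFrobenius_autE hpP) pFrobenius_aut_nat. Qed.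

Definition gg : P := 'X - 'X^2 - 'X^3 + 'X^4.
Definition TT : P := 1 + 'X + 'X^2 + 'X^3 + 'X^4.

Lemma gg2 : cong ee (gg ^+ 2) (5%:R - TT).
Proof. by exists (4%:R - 'X - 2%:R * 'X^2 + 'X^3); rewrite /gg /TT /ee; ring. Qed.
Lemma ggT : cong ee (gg * TT) 0.
Proof. by exists ('X * ('X - 1) * ('X + 1)); rewrite /gg /TT /ee; ring. Qed.
Lemma gg3 : cong ee (gg ^+ 3) (5%:R * gg).
Proof.
have -> : gg ^+ 3 = gg * gg ^+ 2 by ring.
apply: (@cong_trans _ _ (gg * (5%:R - TT))); first exact: cong_mul (cong_refl _ _) gg2.
have -> : gg * (5%:R - TT) = 5%:R * gg - gg * TT by ring.
rewrite -{2}(subr0 (5%:R * gg)); apply: cong_sub; [exact: cong_refl | exact: ggT].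
Qed.
Lemma ggodd k : cong ee (gg ^+ k.*2.+1) ((5%:R : P) ^+ k * gg).
Proof.
elim: k => [|k IH]; first by rewrite expr1 expr0 mul1r; apply: cong_refl.
have -> : gg ^+ (k.+1).*2.+1 = gg ^+ k.*2.+1 * gg ^+ 2.
  by rewrite doubleS -exprD addn2.
apply: (@cong_trans _ _ (((5%:R : P) ^+ k * gg) * gg ^+ 2)); first exact: cong_mul IH (cong_refl _ _).
have -> : (5%:R : P) ^+ k * gg * gg ^+ 2 = (5%:R : P) ^+ k * gg ^+ 3 by ring.
have -> : (5%:R : P) ^+ k.+1 * gg = (5%:R : P) ^+ k * (5%:R * gg) by rewrite exprS; ring.
exact: cong_mul (cong_refl _ _) gg3.
Qed.

Lemma Xip (i r : nat) : (p %% 5)%N = r -> cong ee (('X^i) ^+ p) ('X^((i * r) %% 5)%N).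
Proof. by move=> hr; rewrite -exprM -hr modnMmr; apply: Xmod5. Qed.

Lemma ggp (r : nat) : (p %% 5)%N = r -> r = 1%N \/ r = 4%N -> cong ee (gg ^+ p) gg.
Proof.
move=> hr hr14.
rewrite /gg frobD !frobB -{1}(expr1 'X).
have c1 := Xip 1 hr; have c2 := Xip 2 hr; have c3 := Xip 3 hr; have c4 := Xip 4 hr.
have := cong_add (cong_sub (cong_sub c1 c2) c3) c4.
case: hr14 => -> /= h; apply: (cong_trans h); apply: cong_eq; rewrite ?expr1 //; ring.
Qed.


Let k := p./2.
Lemma hpk : p = k.*2.+1.
Proof. by rewrite -{1}(odd_double_half p) hodd add1n. Qed.
Let c : F := (5%:R : F) ^+ k.
Lemma polyc : (5%:R : P) ^+ k = c%:P.
Proof. by rewrite /c rmorphXn /= polyC_natr. Qed.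

Lemma c2 : c ^+ 2 = 1.
Proof.
have h := pFrobenius_aut_nat hp 5; rewrite pFrobenius_autE hpk exprS in h.
apply: (mulIf h5); rewrite mul1r -{2}h /c -exprM -muln2 mulrC //.
Qed.

Lemma h2 : (2%:R : F) != 0.
Proof.
apply/negP => /eqP h; have : (p %| 2)%N by rewrite (dvdn_pcharf hp) h.
rewrite dvdn_prime2 ?(pcharf_prime hp) // => /eqP e; by move: hodd; rewrite e.
Qed.

Lemma c_pm : c = 1 \/ c = -1.
Proof.
have : (c - 1) * (c + 1) = 0 by rewrite -subr_sqr c2 expr1n subrr.
by move/eqP; rewrite mulf_eq0 subr_eq0 addr_eq0 => /orP [] /eqP; [left|right].
Qed.

Lemma gauss14 : (p %% 5 = 1 \/ p %% 5 = 4)%N -> c = 1.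
Proof.
move=> h.
have h1 := ggp (erefl _) h.
have h3 : cong ee (gg ^+ p) (c%:P * gg) by rewrite {1}hpk -polyc; apply: ggodd.
have h4 : cong ee ((c - 1)%:P * gg) 0.
  have := cong_trans (cong_sym h3) h1; case=> q hq; exists q.
  by rewrite subr0 -hq polyCB polyC1; ring.
have Z := cong0_small h4 ee_neq0.
have {}Z : (c - 1)%:P * gg = 0.
  apply: Z; rewrite size_ee; apply: (leq_ltn_trans (size_polyMleq _ _)).
  have sg : (size gg <= 5)%N.
    rewrite /gg; apply: (leq_trans (size_polyD _ _)); rewrite geq_max size_polyXn andbT.
    apply: (leq_trans (size_polyD _ _)); rewrite geq_max size_polyN size_polyXn andbT.
    apply: (leq_trans (size_polyD _ _)); rewrite geq_max size_polyN size_polyXn andbT.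
    by rewrite size_polyX.
  have := size_polyC_leq1 (c - 1); lia.
move/eqP: Z; rewrite mulf_eq0 polyC_eq0 subr_eq0 => /orP [/eqP //|/eqP hg].
have := congr1 (fun q : P => q`_1) hg.
rewrite /gg /= !coefD !coefN !coefXn coefX /= coef0 !subr0 addr0 => /eqP.
by rewrite oner_eq0.
Qed.

Let s : P := 2%:R * 'X - 1.
Lemma sp : s ^+ p = 2%:R * 'X ^+ p - 1.
Proof. by rewrite /s frobB exprMn frobnat expr1n. Qed.
Lemma s2 : cong dd (s ^+ 2) 5%:R.
Proof. by exists 4%:R; rewrite /s /dd; ring. Qed.
Lemma spc : cong dd (2%:R * 'X ^+ p - 1) (s * c%:P).
Proof.
rewrite -sp -polyc {1}hpk exprS -mul2n exprM.
by apply: cong_mul (cong_refl _ _) (cong_pow _ s2).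
Qed.

Lemma inv2 : (2%:R^-1)%:P * (2%:R : P) = 1.
Proof. by rewrite -polyC_natr -polyCM mulVf ?h2. Qed.

Lemma NTmain :
  ((fpn p.-1).1%:R = 1 :> F /\ (fpn p.-1).2%:R = 0 :> F) \/
  ((p %% 5 = 2 \/ p %% 5 = 3)%N /\
   ((fpn (p.*2 + 2)).1%:R = 1 :> F /\ (fpn (p.*2 + 2)).2%:R = 0 :> F)).
Proof.
have Hs := spc.
have p1 : p = (p.-1).+1 by rewrite hpk.
case: c_pm => hc; rewrite hc in Hs.
- left; apply: extract_dd.
  case: Hs => q hq.
  exists (((2%:R^-1)%:P * q) * ('X - 1) + 1 - 'X^(p.-1)).
  have e1 : ('X ^+ p - 'X : P) = ((2%:R^-1)%:P * q) * dd.
    have e0 : ('X ^+ p - 'X : P) = ((2%:R^-1)%:P * 2%:R) * ('X ^+ p - 'X) by rewrite inv2 mul1r.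
    rewrite {1}e0 -[RHS]mulrA -hq /s polyC1; ring.
  move: e1; rewrite {1}p1 exprS => e1.
  have -> : ('X ^+ p.-1 - 1 : P) = ('X * 'X ^+ p.-1 - 'X) * ('X - 1) + dd - 'X ^+ p.-1 * dd.
    by rewrite /dd; ring.
  rewrite e1; ring.
- right; split.
    have : (p %% 5 <> 0)%N.
      move=> h0; have : (5 %| p)%N by apply/eqP.
      rewrite dvdn_prime2 ?(pcharf_prime hp) // => /eqP e.
      by move: h5; rewrite e (pcharf0 hp) eqxx.
    have : (p %% 5 < 5)%N by rewrite ltn_pmod.
    have hc' : c <> 1 by rewrite hc => e; move: h2; rewrite mulr2n -{1}e addNr eqxx.
    case: (p %% 5)%N gauss14 => [|[|[|[|[|]]]]] //= g _ _.
    + by case: hc'; apply: g; left.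
    + by left. + by right.
    + by case: hc'; apply: g; right.
  apply: extract_dd.
  case: Hs => q hq.
  have e1 : ('X ^+ p + 'X - 1 : P) = ((2%:R^-1)%:P * q) * dd.
    have e0 : ('X ^+ p + 'X - 1 : P) = ((2%:R^-1)%:P * 2%:R) * ('X ^+ p + 'X - 1) by rewrite inv2 mul1r.
    rewrite {1}e0 -[RHS]mulrA -hq /s polyCN polyC1; ring.
  exists (((2%:R^-1)%:P * q * 'X - 1) * ('X ^+ p * 'X - 1)).
  have -> : ('X ^+ (p.*2 + 2) : P) = ('X ^+ p * 'X) ^+ 2 by rewrite -exprSr -exprM; congr (_ ^+ _); lia.
  have -> : (('X ^+ p * 'X) ^+ 2 - 1 : P) = (('X ^+ p + 'X - 1) * 'X - dd) * ('X ^+ p * 'X - 1).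
    by rewrite /dd; ring.
  rewrite e1; ring.
Qed.

End NT.

Lemma bridge (p : nat) (pr : prime p) (U : nat) :
  (fpn U).1%:R = 1 :> 'F_p -> (fpn U).2%:R = 0 :> 'F_p -> Per (Z.of_nat p) U.
Proof.
move=> h1 h2; rewrite /Per /pc fp_fpn /=.
have hc := pchar_Fp pr.
split.
- have x1 : (0 < (fpn U).1)%N.
    move: h1; case: ((fpn U).1) => [|x] //= /eqP; by rewrite eq_sym oner_eq0.
  have : (p %| (fpn U).1 - 1)%N by rewrite (dvdn_pcharf hc) natrB // h1 subrr.
  case/dvdnP => q hq; exists (Z.of_nat q); nia.
- have : (p %| (fpn U).2)%N by rewrite (dvdn_pcharf hc) h2.
  case/dvdnP => q hq; exists (Z.of_nat q); nia.
Qed.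

Local Close Scope ring_scope.
Lemma prime_div_info (n : nat) : Nat.lt 1 n -> pdi_prop n.
Proof.
move=> hn; have hn' : (1 < n)%N by apply/ltP.
rewrite /pdi_prop.
set p := pdiv n.
have pr : prime p := pdiv_prime hn'.
have pd : (p %| n)%N := pdiv_dvd n.
exists p; split.
  case/dvdnP: pd => q hq; exists (Z.of_nat q); rewrite {1}hq; nia.
split; first by apply/ltP; apply: prime_gt1.
have [->|p2] := eqVneq p 2%N; first by left.
have [->|p5] := eqVneq p 5%N; first by right; left.
right; right.
have hodd : odd p by case: (even_prime pr) => // e; rewrite e eqxx in p2.
have hc := pchar_Fp pr.
have h5 : ((5%:R : 'F_p) != 0)%R.
  by rewrite -(dvdn_pcharf hc) dvdn_prime2 // eq_sym.
case: (NTmain hc hodd h5) => [[a1 a2]|[hm [a1 a2]]].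
  left; have -> : Nat.sub p 1 = p.-1 by exact: subn1.
  by apply: bridge.
right; split.
  have e := divn_eq p 5.
  by case: hm => hm; [left|right]; rewrite hm in e; rewrite e Nat2Z.inj_add Nat2Z.inj_mul /= Z.add_comm Z.mod_add.
have -> : Nat.add (Nat.mul 2 p) 2 = (p.*2 + 2)%N by rewrite -mul2n.
by apply: bridge.
Qed.

End NTM.

Lemma goodU a b : forall n : nat, forall m : Z, Z.of_nat n = m -> 1 <= m -> ~ (5 | m) ->
  complete_mod (gib a b) m -> exists V : nat, (1 <= V)%nat /\ ~ (5 | Z.of_nat V) /\ Per m V.
Proof.
intro n; induction n as [n IH] using (well_founded_induction lt_wf).
intros m Hnm Hm H5 Hc.
destruct (Z.eq_dec m 1) as [Hm1|Hm1].
{ rewrite Hm1; exists 1%nat; split; [lia|split].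
  - intros [k Hk]; simpl in Hk; lia.
  - split; apply Z.divide_1_l. }
destruct (@NTM.prime_div_info n) as [p [Hpn [Hp1 Hcases]]]; [lia|].
rewrite Hnm in Hpn; destruct Hpn as [m2 Hm2].
assert (Hm2pos : 1 <= m2) by nia.
assert (Hm2lt : m2 < m) by nia.
assert (H52 : ~ (5 | m2)) by (intro H; apply H5; rewrite Hm2; apply Z.divide_mul_l; assumption).
assert (Hc2 : complete_mod (gib a b) m2)
  by (apply (complete_div _ m); [lia|lia| rewrite Hm2; apply Z.divide_factor_l | assumption]).
assert (Hcp : complete_mod (gib a b) (Z.of_nat p))
  by (apply (complete_div _ m); [lia|lia| rewrite Hm2; apply Z.divide_factor_r | assumption]).
destruct (IH (Z.to_nat m2) ltac:(lia) m2 ltac:(lia) Hm2pos H52 Hc2) as [V2 [HV1 [HV5 HVP]]].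
assert (Hp5 : ~ (5 | Z.of_nat p)).
{ intro H; apply H5; rewrite Hm2; apply Z.divide_mul_r; assumption. }
assert (HVp : exists Vp, (1 <= Vp)%nat /\ ~ (5 | Z.of_nat Vp) /\ Per (Z.of_nat p) Vp).
{ destruct Hcases as [Hp|[Hp|[HP|[Hmod HP]]]].
  - subst p; exists 3%nat; split; [lia|split].
    + intros [k Hk]; simpl in Hk; lia.
    + unfold Per, pc; simpl; split; [exists 0 | exists 1]; reflexivity.
  - exfalso; apply Hp5; subst p; apply Z.divide_refl.
  - exfalso; apply (incomplete a b (Z.of_nat p) (p - 1)); try lia; assumption.
  - exists (2 * p + 2)%nat; split; [lia|split; [|assumption]].
    intros [k Hk]; pose proof (Z.div_mod (Z.of_nat p) 5 ltac:(lia)); lia. }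
destruct HVp as [Vp [HVp1 [HVp5 HPp]]].
exists (V2 * Vp * p)%nat; split; [nia|split].
- rewrite !Nat2Z.inj_mul; repeat apply not5_mul; assumption.
- rewrite Hm2; rewrite <- (Nat2Z.id p) at 2; apply Per_comb; [| |lia].
  + apply Per_mul; assumption.
  + rewrite Nat.mul_comm; apply Per_mul; assumption.
Qed.

Lemma factor5 : forall n : nat, forall m : Z, Z.of_nat n = m -> 1 <= m ->
  exists k m', m = 5 ^ Z.of_nat k * m' /\ 1 <= m' /\ ~ (5 | m').
Proof.
intro n; induction n as [n IH] using (well_founded_induction lt_wf).
intros m Hnm Hm.
destruct (Zdivide_dec 5 m) as [[q Hq]|Hn].
- destruct (IH (Z.to_nat q) ltac:(lia) q ltac:(lia) ltac:(lia)) as [k [m' [E [H1 H2]]]].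
  exists (S k), m'; split; [|split; assumption].
  rewrite Hq, E, Nat2Z.inj_succ, Z.pow_succ_r by lia; ring.
- exists 0%nat, m; split; [change (5 ^ Z.of_nat 0) with 1; ring | split; assumption].
Qed.

Lemma norm_inv s : recs s -> forall n,
  s n ^ 2 + s n * s (S n) - s (S n) ^ 2 = s 0%nat ^ 2 + s 0%nat * s 1%nat - s 1%nat ^ 2 \/
  s n ^ 2 + s n * s (S n) - s (S n) ^ 2 = - (s 0%nat ^ 2 + s 0%nat * s 1%nat - s 1%nat ^ 2).
Proof.
intros Hs n; induction n as [|n IH]; [left; reflexivity|].
assert (E : s (S n) ^ 2 + s (S n) * s (S (S n)) - s (S (S n)) ^ 2 =
  - (s n ^ 2 + s n * s (S n) - s (S n) ^ 2)) by (rewrite (Hs n); ring).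
rewrite E; destruct IH as [IH|IH]; [right|left]; rewrite IH; ring.
Qed.

Lemma rel_prime_pow5 m k : ~ (5 | m) -> rel_prime m (5 ^ Z.of_nat k).
Proof.
intro H; induction k as [|k IH].
- simpl; apply rel_prime_sym, rel_prime_1.
- rewrite Nat2Z.inj_succ, Z.pow_succ_r by lia.
  apply rel_prime_mult; [|assumption].
  apply rel_prime_sym, prime_rel_prime; [exact prime5 | assumption].
Qed.

Theorem mainTheorem18 (a b m : Z) :
  Z.gcd a b = 1 ->
  (a ^ 2 + a * b - b ^ 2) mod 5 <> 0 ->
  1 <= m ->
  (5 | m) ->
  complete_mod (gib a b) m ->
  complete_mod (gib a b) (5 * m).
Proof.
intros _ Hnorm Hm H5 Hc.
set (g := fun k => gib a b (S k)).
assert (Hg : recs g) by apply rec_gib.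
destruct (factor5 (Z.to_nat m) m ltac:(lia) Hm) as [k [m' [Em [Hm' H5']]]].
assert (Hk : (1 <= k)%nat).
{ destruct k; [|lia]. exfalso; apply H5'.
  change (5 ^ Z.of_nat 0) with 1 in Em. rewrite Z.mul_1_l in Em; rewrite <- Em; assumption. }
assert (Hc' : complete_mod (gib a b) m')
  by (apply (complete_div _ m); [lia|lia|rewrite Em; apply Z.divide_factor_r|assumption]).
destruct (goodU a b (Z.to_nat m') m' ltac:(lia) Hm' H5' Hc') as [V [HV1 [HV5 HVP]]].
destruct (five_adic k Hk) as [X [Y [E5 [HX HY]]]].
assert (Hcop := rel_prime_pow5 m' k H5').
set (c := 5 ^ Z.of_nat k) in *.
assert (Hc5 : (5 | c)).
{ unfold c; replace (Z.of_nat k) with (Z.succ (Z.of_nat k - 1)) by lia.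
  rewrite Z.pow_succ_r by lia; apply Z.divide_factor_l. }
set (U := (4 * 5 ^ k * V)%nat).
assert (HPU : Per m' U) by (unfold U; rewrite Nat.mul_comm; apply Per_mul; assumption).
assert (EU : fp U = ppow (1 + c * X, c * Y) V) by (unfold U; rewrite fp_mul, E5; reflexivity).
destruct (ppow_expand (c * X) (c * Y) V) as [S1 [S2 E2]].
destruct (corr_div (c * c) (c * X) (c * Y) S1 S2) as [[t1 W1] [t2 W2]];
  try (apply div_mul2; apply Z.divide_factor_l).
rewrite E2, W1, W2 in EU; clear E2 W1 W2.
destruct HPU as [HP1 HP2]; rewrite EU in HP1, HP2; cbn [fst snd] in HP1, HP2.
assert (G1 : (m' | Z.of_nat V * X + c * t1)).
{ apply (Gauss m' c); [|assumption].
  replace (c * (Z.of_nat V * X + c * t1)) with (1 + Z.of_nat V * (c * X) + t1 * (c * c) - 1) by ring.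
  assumption. }
assert (G2 : (m' | Z.of_nat V * Y + c * t2)).
{ apply (Gauss m' c); [|assumption].
  replace (c * (Z.of_nat V * Y + c * t2)) with (Z.of_nat V * (c * Y) + t2 * (c * c) - 0) by ring.
  assumption. }
destruct G1 as [X2 HX2]; destruct G2 as [Y2 HY2].
assert (Hshift : forall s n, recs s -> s (n + U)%nat = s n + m * (X2 * s n + Y2 * s (S n))).
{ intros s n Hs; rewrite (fshift s U n Hs), EU; cbn [fst snd]; rewrite Em.
  replace (1 + Z.of_nat V * (c * X) + t1 * (c * c)) with (1 + c * (Z.of_nat V * X + c * t1)) by ring.
  replace (Z.of_nat V * (c * Y) + t2 * (c * c)) with (c * (Z.of_nat V * Y + c * t2)) by ring.
  rewrite HX2, HY2; ring. }
set (T := fun n => X2 * g n + Y2 * g (S n)).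
assert (HT : recs T).
{ intro n; unfold T; cbv beta; rewrite (Hg (S n)), (Hg n); ring. }
assert (HPm : Per m U).
{ unfold Per, pc; rewrite EU; cbn [fst snd]; split.
  - exists X2; replace (1 + Z.of_nat V * (c * X) + t1 * (c * c) - 1) with (c * (Z.of_nat V * X + c * t1)) by ring.
    rewrite HX2, Em; ring.
  - exists Y2; replace (Z.of_nat V * (c * Y) + t2 * (c * c) - 0) with (c * (Z.of_nat V * Y + c * t2)) by ring.
    rewrite HY2, Em; ring. }
assert (Hexp : forall N j, exists e, g (N + j * U)%nat = g N + Z.of_nat j * m * T N + m * m * e).
{ intros N j; induction j as [|j [e IH]].
  - exists 0; rewrite Nat.mul_0_l, Nat.add_0_r; cbn [Z.of_nat]; ring.
  - destruct (Per_iter m U T HPm HT j N) as [e' He'].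
    exists (e + e'); replace (N + S j * U)%nat with ((N + j * U) + U)%nat by lia.
    rewrite (Hshift g _ Hg).
    change (X2 * g (N + j * U)%nat + Y2 * g (S (N + j * U))) with (T (N + j * U)%nat).
    replace (T (N + j * U)%nat) with (T N + e' * m) by lia.
    rewrite IH, Nat2Z.inj_succ; ring. }
assert (HTn : forall n, ~ (5 | T n)).
{ intros n H.
  assert (H1 : (5 | m' * T n)) by (apply Z.divide_mul_r; assumption).
  assert (E : m' * T n = Z.of_nat V * (X * g n + Y * g (S n)) + c * (t1 * g n + t2 * g (S n))).
  { unfold T.
    replace (m' * (X2 * g n + Y2 * g (S n))) with ((X2 * m') * g n + (Y2 * m') * g (S n)) by ring.
    rewrite <- HX2, <- HY2; ring. }
  rewrite E in H1.
  assert (H2 : (5 | Z.of_nat V * (X * g n + Y * g (S n)))).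
  { replace (Z.of_nat V * (X * g n + Y * g (S n))) with
      ((Z.of_nat V * (X * g n + Y * g (S n)) + c * (t1 * g n + t2 * g (S n))) - c * (t1 * g n + t2 * g (S n))) by ring.
    apply Z.divide_sub_r; [assumption | apply Z.divide_mul_l; assumption]. }
  destruct (prime_mult 5 prime5 _ _ H2) as [H3|H3]; [contradiction|].
  assert (H4 : (5 | g n + 3 * g (S n))).
  { assert (HX' : (5 | X - 1)) by (apply div_of_mod; [lia|]; rewrite HX; reflexivity).
    assert (HY' : (5 | Y - 3)) by (apply div_of_mod; [lia|]; rewrite HY; reflexivity).
    replace (g n + 3 * g (S n)) with ((X * g n + Y * g (S n)) - ((X - 1) * g n + (Y - 3) * g (S n))) by ring.
    apply Z.divide_sub_r; [assumption|]; apply Z.divide_add_r; apply Z.divide_mul_l; assumption. }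
  assert (H6 : (5 | g n ^ 2 + g n * g (S n) - g (S n) ^ 2)).
  { replace (g n ^ 2 + g n * g (S n) - g (S n) ^ 2) with
      ((g n + 3 * g (S n)) * (g n - 2 * g (S n)) + 5 * g (S n) ^ 2) by ring.
    apply Z.divide_add_r; [apply Z.divide_mul_l; assumption | apply Z.divide_factor_l]. }
  assert (Ha : g 0%nat = a) by reflexivity.
  assert (Hb : g 1%nat = b) by reflexivity.
  apply Hnorm; apply Z.mod_divide; [lia|].
  destruct (norm_inv g Hg n) as [E'|E']; rewrite E', Ha, Hb in H6; [assumption|].
  rewrite Z.divide_opp_r in H6; assumption. }
intro r.
destruct (Hc r) as [n0 [Hn0 E0]].
set (N := (n0 - 1)%nat).
assert (EN : gib a b n0 = g N) by (unfold g, N; f_equal; lia).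
rewrite EN in E0.
apply div_of_mod in E0; [|lia]. destruct E0 as [w Hw].
set (tau := T N).
assert (Htau : tau mod 5 <> 0) by (intro H; apply (HTn N), Z.mod_divide; [lia | assumption]).
assert (Hinv : exists iota, (5 | iota * tau - 1)).
{ pose proof (Z.mod_pos_bound tau 5 ltac:(lia)).
  assert (tau mod 5 = 1 \/ tau mod 5 = 2 \/ tau mod 5 = 3 \/ tau mod 5 = 4) as [Hr|[Hr|[Hr|Hr]]] by lia;
  [exists 1 | exists 3 | exists 2 | exists 4]; apply div_of_mod; try lia;
  rewrite Z.mul_mod, Hr by lia; reflexivity. }
destruct Hinv as [iota Hiota].
set (t := - w).
set (jz := (iota * t) mod 5).
assert (Hjz : 0 <= jz) by (apply Z.mod_pos_bound; lia).
destruct (Hexp N (Z.to_nat jz)) as [e He].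
exists (S (N + Z.to_nat jz * U)); split; [lia|].
change (gib a b (S (N + Z.to_nat jz * U))) with (g (N + Z.to_nat jz * U)%nat).
rewrite He, Z2Nat.id by assumption.
apply mod_of_div; [lia|].
assert (Hj : (5 | jz * tau - t)).
{ unfold jz; rewrite Z.mod_eq by lia.
  replace ((iota * t - 5 * (iota * t / 5)) * tau - t) with
    (t * (iota * tau - 1) - 5 * ((iota * t / 5) * tau)) by ring.
  apply Z.divide_sub_r; [apply Z.divide_mul_r; assumption | apply Z.divide_factor_l]. }
replace (g N) with (r + w * m) by lia.
replace (r + w * m + jz * m * T N + m * m * e - r) with (m * (jz * tau - t) + m * m * e)
  by (unfold t, tau; ring).
apply Z.divide_add_r.
- rewrite (Z.mul_comm 5 m); apply Z.mul_divide_mono_l; assumption.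
- rewrite (Z.mul_comm 5 m), <- Z.mul_assoc; apply Z.mul_divide_mono_l; apply Z.divide_mul_l; assumption.
Qed.
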